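(* Let $\odot$ be a pseudo-multiplication on $[0,\infty]$ with left identity $1_{\odot}$, and let $F_{\odot}$ be the set of $\odot$-finite elements. Then $F_{\odot}$ is either $\{0\}$, or $[0,\infty]$, or of the form $[0,\phi)$ for some $\phi\in(1_{\odot},\infty]$ such that $O(\phi)=\phi$.
   Context: A pseudo-multiplication is a binary operation $\odot:[0,\infty]\times[0,\infty]\to[0,\infty]$ such that: $\odot$ is associative; $\odot$ is continuous on $(0,\infty)\times[0,\infty]$; for every $t$, the map $s\mapsto s\odot t$ is continuous on $(0,\infty]$; $\odot$ is nondecreasing in each argument; there is a left identity element $1_{\odot}$, i.e. $1_{\odot}\odot t=t$ for all $t$; there are no zero divisors, i.e. $s\odot t=0$ implies $s=0$ or $t=0$; and $0$ is an annihilator, i.e. $0\odot t=t\odot 0=0$ for all $t$. For $t\in[0,\infty]$ put $O(t)=\inf_{s>0} s\odot t$. An element $t$ is called $\odot$-finite if $O(t)=0$, and $\odot$-infinite otherwise. *)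

(* Defs.v *)
(* [0,oo] is modelled as the nonnegative part of
   the extended reals \bar R over an abstract R : realType. *)
From HB Require Import structures.
From mathcomp Require Import all_boot all_order all_algebra.
From mathcomp Require Import all_classical all_reals all_analysis.
Set Implicit Arguments. Unset Strict Implicit. Unset Printing Implicit Defensive.
Import Order.TTheory GRing.Theory Num.Theory.
Local Open Scope classical_set_scope.
Local Open Scope ereal_scope.

Section PseudoMult.
Context {R : realType}.

Definition nnE : set (\bar R) := [set t | 0 <= t].

Definition pseudo_mult (op : \bar R -> \bar R -> \bar R) (one : \bar R) : Prop :=
  (forall s t, 0 <= s -> 0 <= t -> 0 <= op s t) /\
      (forall a b c, 0 <= a -> 0 <= b -> 0 <= c -> op (op a b) c = op a (op b c)) /\
      {within [set p : \bar R * \bar R | (0 < p.1 < +oo) /\ 0 <= p.2],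
         continuous (fun p => op p.1 p.2)} /\
      (forall t, 0 <= t -> {within [set s : \bar R | 0 < s], continuous (fun s => op s t)}) /\
      ((forall s s' t, 0 <= s -> s <= s' -> 0 <= t -> op s t <= op s' t) /\
       (forall s t t', 0 <= s -> 0 <= t -> t <= t' -> op s t <= op s t')) /\
      (0 <= one /\ (forall t, 0 <= t -> op one t = t)) /\
      (forall s t, 0 <= s -> 0 <= t -> op s t = 0 -> s = 0 \/ t = 0) /\
      (forall t, 0 <= t -> op 0 t = 0 /\ op t 0 = 0).

Definition Oinf (op : \bar R -> \bar R -> \bar R) (t : \bar R) : \bar R :=
  ereal_inf [set op s t | s in [set s : \bar R | 0 < s]].

Definition odot_finite (op : \bar R -> \bar R -> \bar R) : set (\bar R) :=
  [set t | 0 <= t /\ Oinf op t = 0].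

End PseudoMult.

(* Main.v *)
Set Warnings "-all".
Require Import Defs.
From HB Require Import structures.
From mathcomp Require Import all_boot all_order all_algebra.
From mathcomp Require Import all_classical all_reals all_analysis.
Import Order.TTheory GRing.Theory Num.Theory.
Local Open Scope classical_set_scope.
Local Open Scope ereal_scope.

Lemma cont_lt {R : realType} {op : \bar R -> \bar R -> \bar R} {one : \bar R} :
  pseudo_mult op one -> forall (s r : R) (a : \bar R),
  (0 < s)%R -> (0 <= r)%R -> op s%:E r%:E < a ->
  exists2 d : R, (0 < d)%R & forall y : R, (0 <= y)%R -> (`|r - y| < d)%R -> op s%:E y%:E < a.
Proof.
move=> [pos [_ [cont _]]] s r a s0 r0 lta.
have HA : [set p : \bar R * \bar R | (0 < p.1 < +oo) /\ 0 <= p.2] (s%:E, r%:E).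
  by rewrite /= lte_fin s0 ltry lee_fin r0.
move/subspace_continuousP: cont => /(_ _ HA).
have nb : nbhs (op s%:E r%:E) [set z | z < a].
  have := pos s%:E r%:E; rewrite !lee_fin (ltW s0) r0 => /(_ isT isT) v0.
  move: lta v0; case: (op s%:E r%:E) => [v| |] //; last by rewrite ltNge leey.
  case: a => [a'| |] //.
    by rewrite lte_fin => va _; exact: (@nbhs_open_ereal_lt _ v (fun _ => a')).
  move=> _ _; apply: (filterS _ (@nbhs_open_ereal_lt _ v (fun x => x + 1)%R _)).
    by move=> z /= /lt_le_trans; apply; rewrite leey.
  by rewrite ltrDl.
move=> /(_ _ nb) /=.
case=> -[Q1 Q2] /= [nQ1 nQ2] sub.
have Q1s := nbhs_singleton nQ1.
move/nbhs_EFin: nQ2 => /nbhs_ballP [e /= e0 He].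
exists e => // y y0 ry.
have := sub (s%:E, y%:E) (conj Q1s (He y ry)).
  apply; split => /=; first by rewrite lte_fin s0 ltry.
  by rewrite lee_fin.

Qed.

Ltac dH H := case: H => pos [assoc [cont [contl [[monl monr] [[one0 oneid] [nzd ann]]]]]].

Lemma O_ge0 {R : realType} {op : \bar R -> \bar R -> \bar R} {one : \bar R} :
  pseudo_mult op one -> forall t, 0 <= t -> 0 <= Oinf op t.
Proof.
move=> H t t0; dH H; apply: le_ereal_inf_tmp => y [s /= s0 <-].
exact: pos (ltW s0) t0.
Qed.

Lemma O_le {R : realType} (op : \bar R -> \bar R -> \bar R) s t :
  0 < s -> Oinf op t <= op s t.
Proof. by move=> s0; apply: ereal_inf_lbound; exists s. Qed.

Lemma O_mono {R : realType} {op : \bar R -> \bar R -> \bar R} {one : \bar R} :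
  pseudo_mult op one -> forall t t', 0 <= t -> t <= t' -> Oinf op t <= Oinf op t'.
Proof.
move=> H t t' t0 tt'; dH H; apply: le_ereal_inf_tmp => y [s /= s0 <-].
apply: le_trans (@O_le _ op s t s0) _; exact: monr (ltW s0) t0 tt'.
Qed.

Lemma one_gt0 {R : realType} {op : \bar R -> \bar R -> \bar R} {one : \bar R} :
  pseudo_mult op one -> 0 < one.
Proof.
move=> H; dH H; rewrite lt0e one0 andbT; apply/eqP => e.
have := oneid 1 ltac:(by rewrite lee_fin); rewrite e (ann 1 ltac:(by rewrite lee_fin)).1.
by move/eqP; rewrite eq_sym onee_eq0.
Qed.

Lemma O0 {R : realType} {op : \bar R -> \bar R -> \bar R} {one : \bar R} :
  pseudo_mult op one -> Oinf op 0 = 0.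
Proof.
move=> H; apply/eqP; rewrite eq_le (O_ge0 H) // andbT.
have := @O_le _ op _ 0 (one_gt0 H); dH H; by rewrite (ann one one0).2.
Qed.

Lemma O_idem {R : realType} {op : \bar R -> \bar R -> \bar R} {one : \bar R} :
  pseudo_mult op one -> forall t, 0 <= t -> 0 < Oinf op t ->
  Oinf op (Oinf op t) = Oinf op t.
Proof.
move=> H t t0 c0.
have cge0 : 0 <= Oinf op t by exact: ltW.
have key : forall s u, 0 < s -> 0 < u -> Oinf op t <= op s (op u t).
  move=> s u s0 u0; have H' := H; dH H'.
  rewrite -assoc ?(ltW s0) ?(ltW u0) //; apply: O_le.
  rewrite lt0e pos ?(ltW s0) ?(ltW u0) // andbT; apply/eqP => /nzd.
  by move=> /(_ (ltW s0) (ltW u0)) [] /eqP; rewrite gt_eqF.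
have fin : forall s : R, (0 < s)%R -> Oinf op t <= op s%:E (Oinf op t).
  move=> s s0; move: cge0 c0; case E: (Oinf op t) => [r| |] // _ c0'.
  - rewrite leNgt; apply/negP => lt.
    have r0 : (0 < r)%R by rewrite -lte_fin.
    have [d d0 Hd] := cont_lt H s r _ s0 (ltW r0) lt.
    have : Oinf op t < (r + d)%:E by rewrite E lte_fin ltrDl.
    case/ereal_inf_lt => y [u /= u0 <-] yl.
    have := O_le op u t u0; rewrite E => ry.
    move: yl ry (key s%:E u); rewrite E.
    case: (op u t) => [y'| |] //; rewrite ?lte_fin ?lee_fin => yl ry.
    have := Hd y' (le_trans (ltW r0) ry).
    have -> : (`|r - y'| < d)%R.
      by rewrite distrC ger0_norm ?subr_ge0 // ltrBlDl.
    move=> /(_ isT) lt2 /(_ s0 u0).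
    by rewrite leNgt lt2.
  - have := O_le op 1 t ltac:(by rewrite lte_fin).
    rewrite E leye_eq => /eqP e1.
    have := key s%:E 1 ltac:(by rewrite lte_fin) ltac:(by rewrite lte_fin).
    by rewrite E e1.
have H' := H; dH H'.
apply/eqP; rewrite eq_le; apply/andP; split.
  by have := O_le op one (Oinf op t) (one_gt0 H); rewrite oneid.
apply: le_ereal_inf_tmp => y [s /= s0 <-].
move: s0; case: s => [s| |] //; first by rewrite lte_fin; exact: fin.
move=> _; apply: le_trans (fin 1%R ltr01) _.
by apply: monl => //; rewrite ?leey // lee_fin.
Qed.

Lemma O_one_pos {R : realType} {op : \bar R -> \bar R -> \bar R} {one : \bar R} :
  pseudo_mult op one -> 0 < Oinf op one -> forall u, 0 < u -> 0 < Oinf op u.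
Proof.
move=> H c0 u u0; have H' := H; dH H'.
have cu : 0 < op (Oinf op one) u.
  rewrite lt0e pos ?(ltW c0) ?(ltW u0) // andbT; apply/eqP => /nzd.
  by move=> /(_ (ltW c0) (ltW u0)) [] /eqP; rewrite gt_eqF.
apply: (lt_le_trans cu); apply: le_ereal_inf_tmp => y [s /= s0 <-].
rewrite -{2}(oneid u (ltW u0)) -assoc ?(ltW s0) ?(ltW u0) //.
by apply: monl; rewrite ?(ltW c0) ?(ltW u0) //; apply: O_le.
Qed.

Lemma F_down {R : realType} {op : \bar R -> \bar R -> \bar R} {one : \bar R} :
  pseudo_mult op one -> forall t t', 0 <= t -> t <= t' -> Oinf op t' = 0 -> Oinf op t = 0.
Proof.
move=> H t t' t0 tt' e; apply/eqP; rewrite eq_le (O_ge0 H) // andbT.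
by rewrite -e (O_mono H).
Qed.

Theorem lemma2p5 (R : realType) (op : \bar R -> \bar R -> \bar R) (one : \bar R) :
  pseudo_mult op one ->
  odot_finite op = [set 0] \/
  odot_finite op = @nnE R \/
  exists phi : \bar R, one < phi /\ Oinf op phi = phi /\
    odot_finite op = [set t | 0 <= t < phi].
Proof.
move=> H.
have onep := one_gt0 H.
have [eo1|eo1] := eqVneq (Oinf op one) 0; last first.
  left; apply/seteqP; split => [t [t0 eOt]|t /= ->].
    apply/eqP; rewrite eq_le t0 andbT leNgt; apply/negP => tp.
    have c0 : 0 < Oinf op one by rewrite lt0e eo1 (O_ge0 H) // ltW.
    by have := O_one_pos H c0 t tp; rewrite eOt ltxx.
  by split => //; exact: O0 H.
have [allF|] := pselect (forall t, 0 <= t -> Oinf op t = 0).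
  by right; left; apply/seteqP; split => [t []|t /= t0]; [|split => //; exact: allF].
move=> /existsNP [t0] /not_implyP [t00 eOt0].
right; right.
set F := odot_finite op.
set phi := ereal_sup F.
have ub : forall f, F f -> f <= phi by move=> f Ff; exact: ereal_sup_ubound.
have below : forall x, 0 <= x -> x < phi -> F x.
  move=> x x0 /ereal_sup_gt [f [f0 eOf] xf]; split => //.
  exact: F_down H x f x0 (ltW xf) eOf.
have notin : forall x, 0 <= x -> ~ F x -> phi <= x.
  by move=> x x0 nF; rewrite leNgt; apply/negP => /(below x x0).
have oneF : F one by split => //; exact: ltW.
have phige : one <= phi := ub one oneF.
have phi0 : 0 <= phi := le_trans (ltW onep) phige.
have Opos : forall x, 0 <= x -> ~ F x -> 0 < Oinf op x.
  move=> x x0 nF; rewrite lt0e (O_ge0 H) // andbT; apply/eqP => e; exact: nF.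
have phinF : ~ F phi.
  move=> [_ eOphi].
  have pt0 : phi <= t0 by apply: notin => // -[].
  have : Oinf op phi < phi by rewrite eOphi (lt_le_trans onep).
  case/ereal_inf_lt => y [s /= s0 <-] lt.
  have [s1 s10 lt1] : exists2 s1 : R, (0 < s1)%R & op s1%:E phi < phi.
    move: s0 lt; case: s => [s| |] //; first by rewrite lte_fin => s0 lt; exists s.
    move=> _ lt; exists 1%R => //; apply: le_lt_trans lt.
    have H' := H; dH H'; by apply: monl; rewrite ?leey ?lee_fin.
  move: phige phi0 pt0 lt1 eOphi (ub); case E: phi => [p| |] //; last first.
    move=> _ _; rewrite leye_eq => /eqP et0; by move: eOt0; rewrite et0 -E.
  rewrite !lee_fin => p1 p0 _ lt1 _ ub'.
  have [d d0 Hd] := cont_lt H s1 p _ s10 p0 lt1.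
  have x0 : (0 <= p + d / 2)%R by rewrite addr_ge0 // divr_ge0 // ltW.
  have := Hd (p + d / 2)%R x0.
  rewrite opprD addrA subrr sub0r normrN ger0_norm ?divr_ge0 ?ltW //.
  rewrite ltr_pdivrMr // ltr_pMr // ltr1n => /(_ isT) lt3.
  have lt4 : Oinf op (p + d / 2)%:E < p%:E.
    by apply: le_lt_trans lt3; apply: O_le; rewrite lte_fin.
  have FO : F (Oinf op (p + d / 2)%:E).
    by apply: below; rewrite ?E //; apply: (O_ge0 H); rewrite lee_fin.
  have FO' : F (p + d / 2)%:E.
    split; first by rewrite lee_fin.
    apply: contrapT => ne.
    have := O_idem H (p + d / 2)%:E ltac:(by rewrite lee_fin) (Opos (p + d / 2)%:E ltac:(by rewrite lee_fin) (fun h => ne h.2)).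
    by rewrite FO.2 => /esym.
  have := ub' _ FO'; rewrite lee_fin => h.
  have : (p < p + d / 2)%R by rewrite ltrDl divr_gt0.
  by rewrite ltNge h.
have Feq : F = [set t | 0 <= t < phi].
  apply/seteqP; split => [t Ft|t /= /andP[tg0 tl]]; last exact: below.
  have := ub t Ft; rewrite le_eqVlt => /orP[/eqP e|tl].
    by exfalso; apply: phinF; rewrite -e.
  by rewrite /= tl Ft.1.
exists phi; split; [|split] => //.
  by move: phige; rewrite le_eqVlt => /orP[/eqP e|//]; exfalso; apply: phinF; rewrite -e.
apply/eqP; rewrite eq_le; apply/andP; split.
  have H' := H; dH H'.
  by have := O_le op one phi onep; rewrite oneid.
apply: notin; first exact: (O_ge0 H).
move=> [_ e].
have := O_idem H phi phi0 (Opos phi phi0 phinF).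
rewrite e => e'.
by apply: phinF; split.
Qed.
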